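(* Let $\Lambda\Subset\mathbb X$. For a selector $s$, let $\rho_0=\mathbf 1_{\{\varnothing\}}:\mathbf F\to\mathbb C$ and $\rho_{n+1}=K_\Lambda\rho_n$ for $n\in\mathbb N_0$. Then the sequence $(\rho_n)_{n\in\mathbb N_0}$ does not depend on the choice of the selector $s$, and $\rho_n(\varnothing)=1$ for every $n\in\mathbb N_0$.
   Context: $\mathbb X$ is a finite or countably infinite set, $X\Subset\mathbb X$ means finite subset, $\mathbf F$ is the set of finite subsets. Fix $z:\mathbb X\to\mathbb C$, $W:\mathbf F\to\mathbb C$. Conditional interaction: $W(X\mid B)=\prod_{C\subset B}W(X\cup C)$ if $X\cap B=\varnothing$, $W(X\mid B)=0$ if $X=\{y\}$ with $y\in B$, $W(X\mid B)=1$ otherwise. Boltzmann factor $\kappa(X\mid B)=\prod_{\varnothing\neq S\subset X}W(S\mid B)$, $\kappa(s\mid B)=\kappa(\{s\}\mid B)$. Kernel: $\gamma(s,N\mid B)=\sum_{M\subset N}(-1)^{|N\setminus M|}\kappa(s\mid B\cup M)$. A selector is a map $s:\mathbf F\setminus\{\varnothing\}\to\mathbb X$ with $s_X:=s(X)\in X$; put $X'_s=X\setminus\{s_X\}$. For $\rho:\mathbf F\to\mathbb C$, the Kirkwood--Salsburg operator is $(K_\Lambda\rho)(\varnothing)=\rho(\varnothing)$ and, for $X\neq\varnothing$, $(K_\Lambda\rho)(X)=\sum_{N\subset\Lambda\setminus X'_s}z(s_X)\gamma(s_X,N\mid X'_s)\rho(X'_s\cup N)$. *)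

(* Defs.v *)
From HB Require Import structures.
From mathcomp Require Import all_boot all_order all_algebra.
From mathcomp Require Import finmap.
From mathcomp Require Import complex.
From mathcomp Require Import reals.
Set Implicit Arguments. Unset Strict Implicit. Unset Printing Implicit Defensive.
Import Order.TTheory GRing.Theory Num.Theory.
Local Open Scope ring_scope.
Local Open Scope fset_scope.

Section KS.
Variables (R : realType) (X : countType).
Local Notation C := (R[i])%C.
Variables (z : X -> C) (W : {fset X} -> C).

Definition Wcond (Y B : {fset X}) : C :=
  if Y `&` B == fset0 then \prod_(D <- fpowerset B) W (Y `|` D)
  else if [exists y : Y, (Y == [fset val y]) && (val y \in B)] then 0
  else 1.

Definition kappa (Y B : {fset X}) : C :=
  \prod_(S <- fpowerset Y | S != fset0) Wcond S B.

Definition gamma (x : X) (N B : {fset X}) : C :=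
  \sum_(M <- fpowerset N) (-1) ^+ #|` (N `\` M)| * kappa [fset x] (B `|` M).

Definition is_selector (s : {fset X} -> X) : Prop :=
  forall Y : {fset X}, Y != fset0 -> s Y \in Y.

Definition KS (s : {fset X} -> X) (Lam : {fset X}) (rho : {fset X} -> C)
  (Y : {fset X}) : C :=
  if Y == fset0 then rho fset0
  else let x := s Y in let Y' := Y `\ x in
       \sum_(N <- fpowerset (Lam `\` Y')) z x * gamma x N Y' * rho (Y' `|` N).

Definition rho0 (Y : {fset X}) : C := if Y == fset0 then 1 else 0.

Fixpoint rho_seq (s : {fset X} -> X) (Lam : {fset X}) (n : nat) : {fset X} -> C :=
  match n with
  | 0 => rho0
  | n.+1 => KS s Lam (rho_seq s Lam n)
  end.

End KS.

(* Main.v *)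
Require Import Defs.
From HB Require Import structures.
From mathcomp Require Import all_boot all_order all_algebra.
From mathcomp Require Import finmap complex reals.
From mathcomp Require Import ring.
Local Open Scope ring_scope.
Import Order.TTheory GRing.Theory Num.Theory.

Section Aux.
Local Set Implicit Arguments. Local Unset Strict Implicit.
Local Open Scope fset_scope.
Local Open Scope ring_scope.
Variable T : choiceType.

Lemma fpow_split (R : Type) (idx : R) (op : Monoid.com_law idx) (a : T)
  (A : {fset T}) (F : {fset T} -> R) : a \notin A ->
  \big[op/idx]_(M <- fpowerset (a |` A)) F M =
  op (\big[op/idx]_(M <- fpowerset A) F M)
     (\big[op/idx]_(M <- fpowerset A) F (a |` M)).
Proof.
move=> aA; rewrite (big_fsetID _ (fun M : {fset T} => a \notin M)); congr (op _ _).
  apply: eq_fbigl => M; rewrite !inE /= !fpowersetE.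
  apply/andP/idP => [[/fsubsetP sub aM]|sub].
    apply/fsubsetP => y yM; have := sub y yM; rewrite !inE => /orP[/eqP eq|//].
    by subst; rewrite yM in aM.
  split; first exact: fsubset_trans sub (fsubsetUr _ _).
  by apply: contra aA => /(fsubsetP sub).
transitivity (\big[op/idx]_(M <- [fset a |` M | M in fpowerset A]) F M).
  apply: eq_fbigl => M; rewrite !inE /= fpowersetE negbK.
  apply/andP/imfsetP => [[sub aM]|[M' /= M'A ->]].
    exists (M `\ a); last by rewrite fsetD1K.
    rewrite /= fpowersetE; apply/fsubsetP => y; rewrite !inE => /andP[ya yM].
    by have := fsubsetP sub y yM; rewrite !inE (negbTE ya).
  split; last by rewrite fset1U1.
  rewrite fpowersetE in M'A; exact: fsetUS.
rewrite big_imfset //= => M1 M2 M1A M2A eq.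
have aM1 : a \notin M1.
  by apply: contra aA; move: M1A; rewrite /= fpowersetE => /fsubsetP; apply.
have aM2 : a \notin M2.
  by apply: contra aA; move: M2A; rewrite /= fpowersetE => /fsubsetP; apply.
by rewrite -(fsetU1K aM1) eq fsetU1K.
Qed.
End Aux.

Section Aux2.
Local Set Implicit Arguments. Local Unset Strict Implicit.
Local Open Scope fset_scope.
Local Open Scope ring_scope.
Variable T : choiceType.
Variable R : comRingType.

Lemma sign_sum (A : {fset T}) :
  \sum_(M <- fpowerset A) (-1 : R) ^+ #|` M| = (A == fset0)%:R.
Proof.
have [->|/fset0Pn[a aA]] := eqVneq A fset0.
  by rewrite fpowerset0 big_seq_fset1 cardfs0 expr0.
rewrite -(fsetD1K aA) fpow_split ?fsetD11 //.
transitivity (\sum_(M <- fpowerset (A `\ a)) (-1 : R) ^+ #|` M| +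
  \sum_(M <- fpowerset (A `\ a)) - (-1 : R) ^+ #|` M|); last by rewrite sumrN subrr.
congr (_ + _); apply: eq_fbigr => M; rewrite fpowersetE => MA _; rewrite cardfsU1.
have -> : a \notin M by apply/negP => /(fsubsetP MA); rewrite fsetD11.
by rewrite add1n exprS mulN1r.
Qed.

Lemma swap_sum (A : {fset T}) (h : {fset T} -> {fset T} -> R) :
  \sum_(M <- fpowerset A) \sum_(M' <- fpowerset M) h M' M =
  \sum_(M' <- fpowerset A) \sum_(U <- fpowerset (A `\` M')) h M' (M' `|` U).
Proof.
elim/fset1U_rect: A h => [|a A aA IH] h.
  rewrite fpowerset0 !big_seq_fset1 fpowerset0 fsetD0 fpowerset0 big_seq_fset1.
  by rewrite big_seq_fset1 fsetU0.
have nM : forall M, M \in fpowerset A -> a \notin M.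
  by move=> M; rewrite fpowersetE => MA; apply: contra aA => /(fsubsetP MA).
have E2 : \sum_(M <- fpowerset A) \sum_(M' <- fpowerset (a |` M)) h M' (a |` M) =
   \sum_(M <- fpowerset A) \sum_(M' <- fpowerset M) h M' (a |` M) +
   \sum_(M <- fpowerset A) \sum_(M' <- fpowerset M) h (a |` M') (a |` M).
  rewrite -big_split; apply: eq_fbigr => M /nM aM _.
  exact: (fpow_split _ (fun M' => h M' (a |` M)) aM).
have E1 : \sum_(M' <- fpowerset A) \sum_(U <- fpowerset ((a |` A) `\` M')) h M' (M' `|` U) =
   \sum_(M' <- fpowerset A) \sum_(U <- fpowerset (A `\` M')) h M' (M' `|` U) +
   \sum_(M' <- fpowerset A) \sum_(U <- fpowerset (A `\` M')) h M' (a |` (M' `|` U)).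
  rewrite -big_split; apply: eq_fbigr => M /nM aM _.
  have -> : (a |` A) `\` M = a |` (A `\` M).
    apply/fsetP => y; rewrite !inE; case: (eqVneq y a) => [->|] //=.
    by rewrite (negbTE aM).
  rewrite (fpow_split _ (fun U => h M (M `|` U))); last by rewrite !inE (negbTE aA) andbF.
  congr (_ + _); apply: eq_bigr => U _; congr (h _ _).
  by apply/fsetP => y; rewrite !inE; case: (y == a); rewrite ?orbT.
have E3 : \sum_(M' <- fpowerset A) \sum_(U <- fpowerset ((a |` A) `\` (a |` M'))) h (a |` M') ((a |` M') `|` U) =
   \sum_(M' <- fpowerset A) \sum_(U <- fpowerset (A `\` M')) h (a |` M') (a |` (M' `|` U)).
  apply: eq_fbigr => M /nM aM _.
  have -> : (a |` A) `\` (a |` M) = A `\` M.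
    apply/fsetP => y; rewrite !inE; case: (eqVneq y a) => [->|] //=.
    by rewrite (negbTE aA) andbF.
  by apply: eq_bigr => U _; rewrite fsetUA.
rewrite (fpow_split _ (fun M => \sum_(M' <- fpowerset M) h M' M) aA).
rewrite (fpow_split _ (fun M' => \sum_(U <- fpowerset ((a |` A) `\` M')) h M' (M' `|` U)) aA) /=.
rewrite E2 E1 E3 !IH.
exact: addrA.
Qed.

Lemma mobius (N : {fset T}) (f : {fset T} -> R) :
  \sum_(M <- fpowerset N) \sum_(M' <- fpowerset M)
     (-1) ^+ #|` (M `\` M')| * f M' = f N.
Proof.
rewrite (swap_sum N (fun M' M => (-1) ^+ #|` (M `\` M')| * f M')).
rewrite (eq_fbigr _ (G := fun M' : {fset T} => ((N `\` M') == fset0)%:R * f M')); last first.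
  move=> M' _ _; rewrite -sign_sum mulr_suml; apply: eq_fbigr => U.
  rewrite fpowersetE => UN _; congr (_ ^+ _ * _); congr #|` _|.
  apply/fsetP => y; rewrite !inE; case yU: (y \in U); rewrite ?orbT ?orbF /=.
    by have := fsubsetP UN y yU; rewrite !inE => /andP[-> _].
  by rewrite andNb.
rewrite (big_fsetD1 N) ?fpowersetE ?fsubset_refl //= fsetDv eqxx mul1r.
rewrite big1_fset ?addr0 // => M; rewrite !inE fpowersetE => /andP[MsN MN] _.
have -> : (N `\` M == fset0) = false; last by rewrite mul0r.
rewrite fsetD_eq0; apply/negP => NM; move: MsN; rewrite /=.
have -> : M = N by apply/eqP; rewrite eqEfsubset MN NM.
by rewrite eqxx.

Qed.
End Aux2.

Section Main.
Local Set Implicit Arguments. Local Unset Strict Implicit.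
Local Open Scope fset_scope.
Local Open Scope ring_scope.
Variables (R : realType) (X : countType).
Local Notation C := (R[i])%C.
Variables (z : X -> C) (W : {fset X} -> C) (Lam : {fset X}).

Lemma Wcond0 S : Wcond W S fset0 = W S.
Proof. by rewrite /Wcond fsetI0 eqxx fpowerset0 big_seq_fset1 fsetU0. Qed.

Lemma kappa1 x B : kappa W [fset x] B = Wcond W [fset x] B.
Proof.
rewrite /kappa big_mkcond.
have -> : fpowerset [fset x] = fpowerset (x |` fset0) by rewrite fsetU0.
rewrite (fpow_split _ (fun S => if S != fset0 then Wcond W S B else 1)) ?inE //=.
rewrite fpowerset0 !big_seq_fset1 eqxx fsetU0 /=.
have -> : ([fset x] != fset0) by apply/negP => /eqP e; have := fset11 x; rewrite e inE.
by rewrite mul1r.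
Qed.

Lemma kappa_in x B : x \in B -> kappa W [fset x] B = 0.
Proof.
move=> xB; rewrite kappa1 /Wcond.
have xI : x \in [fset x] `&` B by rewrite !inE eqxx xB.
have -> : ([fset x] `&` B == fset0) = false by apply/negP => /eqP e; rewrite e inE in xI.
have -> // : [exists y : [fset x], ([fset x] == [fset val y]) && (val y \in B)].
by apply/existsP; exists [` fset11 x]; rewrite /= eqxx xB.
Qed.

Lemma kappa_notin x B : x \notin B ->
  kappa W [fset x] B = \prod_(D <- fpowerset B) W (x |` D).
Proof.
move=> xB; rewrite kappa1 /Wcond.
have -> // : ([fset x] `&` B == fset0).
apply/eqP/fsetP => y; rewrite !inE; case: (eqVneq y x) => [->|] //=.
by rewrite (negbTE xB).
Qed.

Lemma kappa_cons x B : x \notin B ->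
  kappa W (x |` B) fset0 = kappa W [fset x] B * kappa W B fset0.
Proof.
move=> xB; rewrite kappa_notin // /kappa big_mkcond.
rewrite (fpow_split _ (fun S => if S != fset0 then Wcond W S fset0 else 1) xB) /=.
rewrite mulrC; congr (_ * _); last by rewrite -big_mkcond.
apply: eq_bigr => S _.
have -> : (x |` S != fset0) by apply/negP => /eqP e; have := fset1U1 x S; rewrite e inE.
by rewrite Wcond0.
Qed.

Definition P (Y : {fset X}) : C := (\prod_(y <- Y) z y) * kappa W Y fset0.

Lemma P_cons x B : x \notin B -> P (x |` B) = z x * kappa W [fset x] B * P B.
Proof.
move=> xB; rewrite /P big_fsetU1 //= kappa_cons //.
by rewrite -!mulrA; congr (_ * _); rewrite mulrCA.
Qed.

Lemma P0 : P fset0 = 1.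
Proof.
rewrite /P big_seq_fset0 mul1r /kappa big_mkcond fpowerset0 big_seq_fset1.
by rewrite eqxx.
Qed.

Definition g (k : nat) (Y : {fset X}) : C := if #|` Y| == k then P Y else 0.

Definition phi (k : nat) (Y : {fset X}) : C :=
  \sum_(N <- fpowerset (Lam `\` Y)) g k (Y `|` N).

Lemma phi0 Y : phi 0 Y = (Y == fset0)%:R.
Proof.
rewrite /phi (big_fsetD1 fset0) ?fpowersetE ?fsub0set //= fsetU0.
rewrite big1_fset ?addr0.
  rewrite /g cardfs_eq0; case: (eqVneq Y fset0) => [->|] //.
  by rewrite P0.
move=> N; rewrite !inE => /andP[N0 _] _; rewrite /g.
have -> // : (#|` (Y `|` N)| == 0)%N = false.
rewrite cardfs_eq0; apply/negP => /eqP e.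
case/fset0Pn: N0 => y yN.
have : y \in Y `|` N by rewrite inE yN orbT.
by rewrite e inE.
Qed.

Lemma KS_phi k Y x : x \in Y ->
  \sum_(N <- fpowerset (Lam `\` (Y `\ x))) z x * gamma W x N (Y `\ x) * phi k ((Y `\ x) `|` N)
  = phi k.+1 Y.
Proof.
move=> xY; set Y' := Y `\ x; set A := Lam `\` Y'.
have xY' : x \notin Y' by rewrite !inE eqxx.
have step1 : \sum_(N <- fpowerset A) z x * gamma W x N Y' * phi k (Y' `|` N) =
  \sum_(N <- fpowerset A) \sum_(U <- fpowerset (A `\` N))
    (fun M' M => z x * gamma W x M' Y' * g k (Y' `|` M)) N (N `|` U).
  apply: eq_bigr => N _; rewrite /phi mulr_sumr -fsetDDl; apply: eq_bigr => U _ /=.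
  by rewrite fsetUA.
rewrite step1 -(swap_sum A (fun M' M => z x * gamma W x M' Y' * g k (Y' `|` M))) /=.
have step2 : \sum_(M <- fpowerset A) \sum_(M' <- fpowerset M) z x * gamma W x M' Y' * g k (Y' `|` M)
  = \sum_(N <- fpowerset A) z x * g k (Y' `|` N) * kappa W [fset x] (Y' `|` N).
  apply: eq_bigr => N _.
  rewrite -(mobius N (fun M' => kappa W [fset x] (Y' `|` M'))) mulr_sumr.
  apply: eq_bigr => M _; rewrite /gamma; ring.
rewrite step2 /phi.
have key : forall N, N \in fpowerset (Lam `\` Y) ->
    z x * g k (Y' `|` N) * kappa W [fset x] (Y' `|` N) = g k.+1 (Y `|` N).
  move=> N; rewrite fpowersetE => NL.
  have xN : x \notin N by apply/negP => /(fsubsetP NL); rewrite !inE xY.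
  have xB : x \notin Y' `|` N by rewrite inE negb_or xY' xN.
  have -> : Y `|` N = x |` (Y' `|` N).
    apply/fsetP => y; rewrite !inE; case: (eqVneq y x) => [->|] //=.
    by rewrite xY.
  rewrite /g cardfsU1 xB add1n eqSS P_cons //.
  case: (_ == k)%N; last by rewrite mulr0 mul0r.
  ring.
have [xL|xL] := boolP (x \in Lam).
  have -> : A = x |` (Lam `\` Y).
    apply/fsetP => y; rewrite !inE; case: (eqVneq y x) => [->|] //=.
  rewrite (fpow_split _ (fun N => z x * g k (Y' `|` N) * kappa W [fset x] (Y' `|` N)));
    last by rewrite !inE xY.
  have -> : \sum_(N <- fpowerset (Lam `\` Y))
      z x * g k (Y' `|` (x |` N)) * kappa W [fset x] (Y' `|` (x |` N)) = 0.
    by apply: big1_fset => N _ _; rewrite kappa_in ?mulr0 // !inE eqxx orbT.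
  apply: (etrans (addr0 _)).
  by apply: eq_fbigr => N NL _; apply: key.
have -> : A = Lam `\` Y.
  apply/fsetP => y; rewrite !inE; case: (eqVneq y x) => [->|] //=.
  by rewrite (negbTE xL) andbF.
by apply: eq_fbigr => N NL _; apply: key.
Qed.

Lemma rho_repr n : exists c : nat -> C, forall s, is_selector s -> forall Y,
  rho_seq z W s Lam n Y = \sum_(k < n.+1) c k * phi k Y.
Proof.
elim: n => [|n [c Hc]].
  exists (fun _ => 1) => s _ Y /=; rewrite big_ord1 mul1r phi0 /rho0.
  by case: (Y == fset0).
exists (fun k => if k is k'.+1 then c k' else
  \sum_(k < n.+1) c k * phi k fset0 - \sum_(k < n.+1) c k * phi k.+1 fset0).
move=> s sel Y /=; rewrite big_ord_recl /= phi0 /KS.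
have -> : \sum_(i < n.+1) c (0 + i)%N * phi (bump 0 i) Y = \sum_(i < n.+1) c i * phi i.+1 Y.
  by apply: eq_bigr => i _; rewrite /bump add0n.
case: (eqVneq Y fset0) => [->|Y0].
  by rewrite /= mulr1 Hc // subrK.
rewrite [_ * false%:R]mulr0 add0r.
have xY := sel Y Y0.
under eq_bigr => N _ do rewrite Hc // mulr_sumr.
rewrite exchange_big /=; apply: eq_bigr => i _.
rewrite -(KS_phi i xY) mulr_sumr; apply: eq_bigr => N _; ring.
Qed.

End Main.

Theorem lemma6p2 (R : realType) (X : countType) (z : X -> (R[i])%C)
  (W : {fset X} -> (R[i])%C) (Lam : {fset X}) :
  (forall s1 s2 : {fset X} -> X, is_selector s1 -> is_selector s2 ->
     forall (n : nat) (Y : {fset X}),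
       rho_seq z W s1 Lam n Y = rho_seq z W s2 Lam n Y) /\
  (forall s : {fset X} -> X, is_selector s ->
     forall n : nat, rho_seq z W s Lam n fset0 = 1).
Proof.
split.
  move=> s1 s2 h1 h2 n Y; have [c Hc] := rho_repr z W Lam n.
  by rewrite (Hc s1 h1) (Hc s2 h2).
move=> s _; elim => [|n IH] /=; first by rewrite /rho0 eqxx.
by rewrite /KS eqxx.
Qed.
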